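(* Let $s,t$ be real numbers. Then $\det U_4^{(rc)} = 3s^2t^2$, $\det U_5^{(rc)} = s^4t + 4s^2t^3$, and for every $n \geq 6$, $$\det U_n^{(rc)} = t\,\det U_{n-1}^{(rc)} + s^2 \det U_{n-2}^{(rc)}.$$
   Context: For $n\ge 1$, $U_n=U_n(s,t)$ is the $n\times n$ upper Hessenberg matrix with subdiagonal entries $a_{i+1,i}=s$, $a_{ij}=0$ for $i>j+1$, $a_{ij}=t$ if $j\ge i$ and $j-i$ is even, and $a_{ij}=0$ if $j>i$ and $j-i$ is odd. For $n\ge 4$, let $X_n$ be the matrix obtained from $U_n$ by replacing the $(1,1)$ entry by $s$, the $(2,1)$ entry by $t$, the $(n,n-1)$ entry by $t$ and the $(n,n)$ entry by $s$. Let $P_n^{(r)}$ be the $n\times n$ identity matrix with its first two rows interchanged and $P_n^{(c)}$ the $n\times n$ identity matrix with its last two columns interchanged, and define $U_n^{(rc)} = P_n^{(r)} X_n P_n^{(c)}$ (an upper Hessenberg matrix with subdiagonal entries $s$ and upper triangular entries in $\{0,t\}$). *)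

(* Defs.v *)
From mathcomp Require Import all_boot all_order all_algebra.
From mathcomp Require Import Rstruct.
From Stdlib Require Import Rdefinitions.
Set Implicit Arguments. Unset Strict Implicit. Unset Printing Implicit Defensive.
Import GRing.Theory.
Local Open Scope ring_scope.

(* Indices are 0-based: entry (i,j) below corresponds to the paper's (i+1,j+1). *)

Definition Umx (R : pzRingType) (n : nat) (s t : R) : 'M[R]_n :=
  \matrix_(i < n, j < n)
    if (j.+1 == i :> nat) then s
    else if (leq i j) && ~~ odd ((j : nat) - (i : nat)) then t else 0.

Definition Xmx (R : pzRingType) (n : nat) (s t : R) : 'M[R]_n :=
  \matrix_(i < n, j < n)
    if ((i == 0%N :> nat) && (j == 0%N :> nat)) then s
    else if ((i == 1%N :> nat) && (j == 0%N :> nat)) then t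
    else if ((i == n.-1 :> nat) && (j == n.-2 :> nat)) then t
    else if ((i == n.-1 :> nat) && (j == n.-1 :> nat)) then s
    else Umx n s t i j.

(* Permutation matrices: identity with rows 1,2 swapped / columns n-1,n swapped. *)
Definition Prow (R : pzRingType) (n : nat) : 'M[R]_n :=
  \matrix_(i < n, j < n)
    (((if (i == 0%N :> nat) then 1%N else if (i == 1%N :> nat) then 0%N else (i : nat))
      == (j : nat))%:R).

Definition Pcol (R : pzRingType) (n : nat) : 'M[R]_n :=
  \matrix_(i < n, j < n)
    (((i : nat) ==
      (if (j == n.-2 :> nat) then n.-1 else if (j == n.-1 :> nat) then n.-2 else (j : nat)))%:R).

Definition Urc (R : pzRingType) (n : nat) (s t : R) : 'M[R]_n :=
  Prow R n *m Xmx n s t *m Pcol R n.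

(* Main.v *)
Require Import Defs.
From mathcomp Require Import all_boot all_order all_algebra all_fingroup.
From mathcomp Require Import Rstruct zify ring.
From Stdlib Require Import Rdefinitions.
Import GRing.Theory.
Local Open Scope ring_scope.

Definition mxf {K : comNzRingType} n (f : nat -> nat -> K) : 'M[K]_n := \matrix_(i < n, j < n) f i j.

Lemma mxf_ext {K : comNzRingType} (n : nat) (f g : nat -> nat -> K) : (forall i j : nat, (i < n)%nat -> (j < n)%nat -> f i j = g i j) ->
  mxf n f = mxf n g.
Proof. by move=> h; apply/matrixP=> i j; rewrite !mxE h. Qed.

Lemma minor_mxf {K : comNzRingType} (k : nat) (f : nat -> nat -> K) (j0 : 'I_k.+1) :
  row' ord_max (col' j0 (mxf k.+1 f)) = mxf k (fun i j => f i (bump j0 j)).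
Proof. by apply/matrixP=> i j; rewrite !mxE lift_max. Qed.

Lemma detL1 {K : comNzRingType} (k : nat) (g : nat -> nat -> K) : (forall i : nat, (i < k)%nat -> g i k = 0) ->
  \det (mxf k.+1 g) = g k k * \det (mxf k g).
Proof.
move=> h; rewrite (expand_det_col _ ord_max) big_ord_recr /= big1 ?add0r.
  rewrite /cofactor minor_mxf mxE /= addnn -signr_odd odd_double expr0 mul1r.
  congr (_ * \det _); apply: mxf_ext => i j _ hj.
  by rewrite /bump leqNgt hj.
by move=> i _; rewrite mxE /= h ?mul0r.
Qed.

Lemma detL2 {K : comNzRingType} (k : nat) (f : nat -> nat -> K) : (forall j : nat, (j < k)%nat -> f k.+1 j = 0) ->
  (forall i : nat, (i < k)%nat -> f i k.+1 = 0) ->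
  \det (mxf k.+2 f) = f k.+1 k.+1 * \det (mxf k.+1 f)
                      - f k.+1 k * f k k.+1 * \det (mxf k f).
Proof.
move=> hr hc; rewrite (expand_det_row _ ord_max) big_ord_recr /= big_ord_recr /= big1 ?add0r.
  rewrite /cofactor !mxE /= !minor_mxf.
  have -> : mxf k.+1 (fun i j => f i (bump (@ord_max k.+1) j)) = mxf k.+1 f.
    apply: mxf_ext => i j _ hj; by rewrite /bump leqNgt hj.
  set g := (fun i j : nat => _).
  rewrite (detL1 k g); last by move=> i hi; rewrite /g /bump /= leqnn hc.
  have -> : mxf k g = mxf k f.
    apply: mxf_ext => i j _ hj; by rewrite /g /bump /= leqNgt hj.
  have gkk : g k k = f k k.+1 by rewrite /g /bump /= leqnn.
  have s1 : (-1)^+(k.+1+k) = -1 :> K by rewrite -signr_odd addSn addnn /= odd_double.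
  have s2 : (-1)^+(k.+1+k.+1) = 1 :> K by rewrite -signr_odd addnn odd_double.
  rewrite gkk s1 s2; ring.
by move=> j _; rewrite mxE /= hr ?mul0r.
Qed.

Definition uf {K : comNzRingType} (s t : K) (i j : nat) :=
  if (j.+1 == i)%nat then s else if (leq i j) && ~~ odd (j - i)%nat then t else 0.
Definition xf {K : comNzRingType} (s t : K) (n i j : nat) :=
  if ((i == 0%nat) && (j == 0%nat))%nat then s
  else if ((i == 1%nat) && (j == 0%nat))%nat then t
  else if ((i == n.-1) && (j == n.-2))%nat then t
  else if ((i == n.-1) && (j == n.-1))%nat then s
  else uf s t i j.
Definition tf {K : comNzRingType} (s t : K) (n i j : nat) :=
  xf s t n i j - (if leq 2 j then xf s t n i (j - 2)%nat else 0).

Ltac fb := match goal with |- context [if ?c then _ else _] =>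
  (rewrite (_ : c = true); last by lia) || (rewrite (_ : c = false); last by lia) end.

Definition step {K : comNzRingType} (s t : K) (i j : nat) :=
  if (j == i)%nat then t else if (j == i.+1)%nat then - s
  else if (j.+1 == i)%nat then s else 0.

Lemma ustep {K : comNzRingType} (s t : K) i j : (2 <= j)%nat ->
  uf s t i j - uf s t i (j - 2) = step s t i j.
Proof.
move=> hj; rewrite /uf /step.
case: (ltnP (j.+1) i) => h1.
  repeat fb; ring.
case: (ltnP i (j - 2)) => h2.
  have ho : odd (j - 2 - i) = odd (j - i) by lia.
  rewrite ho (_ : (i <= j)%nat = true); last by lia.
  rewrite (_ : (i <= j - 2)%nat = true) /=; last by lia.
  repeat fb; case: (odd (j - i)) => /=; ring.
have [e|[e|[e|e]]] : (i = j.+1 \/ i = j \/ i = j - 1 \/ i = j - 2)%nat by lia.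
- subst i; repeat fb; ring.
- subst i; repeat fb; ring.
- subst i; repeat fb; ring.
- subst i; repeat fb; ring.
Qed.

Lemma xf_gen {K : comNzRingType} (s t : K) n i j : (i.+1 < n)%nat ->
  (j != 0%nat) || (1 < i)%nat -> xf s t n i j = uf s t i j.
Proof. by move=> h1 h2; rewrite /xf; repeat fb. Qed.

Lemma tf_gen {K : comNzRingType} (s t : K) n i j : (i.+1 < n)%nat -> (2 <= j)%nat ->
  (2 < j)%nat || (1 < i)%nat -> tf s t n i j = step s t i j.
Proof.
move=> h1 h2 h3; rewrite /tf h2 (xf_gen s t n i j h1); last by lia.
by rewrite (xf_gen s t n i (j - 2)%nat h1) ?ustep //; lia.
Qed.

Ltac ev := rewrite /tf /xf /uf; repeat fb; ring.

Lemma F1 {K : comNzRingType} (s t : K) m j : (j < m.+2)%nat -> tf s t m.+4 m.+3 j = 0.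
Proof. move=> h; rewrite /tf; case: ifP => h2; rewrite /xf /uf; repeat fb; ring. Qed.
Lemma F2 {K : comNzRingType} (s t : K) m i : (i < m.+2)%nat -> tf s t m.+4 i m.+3 = 0.
Proof. by move=> h; rewrite tf_gen /step; try lia; repeat fb. Qed.
Lemma F3 {K : comNzRingType} (s t : K) m : tf s t m.+4 m.+3 m.+3 = s.
Proof. ev. Qed.
Lemma F4 {K : comNzRingType} (s t : K) m : tf s t m.+4 m.+3 m.+2 = t.
Proof. ev. Qed.
Lemma F5 {K : comNzRingType} (s t : K) m : tf s t m.+4 m.+2 m.+3 = - s.
Proof. ev. Qed.
Lemma H1 {K : comNzRingType} (s t : K) m j : (j < m.+2)%nat -> tf s t m.+4.+1 m.+3 j = 0.
Proof. move=> h; rewrite /tf; case: ifP => h2; rewrite /xf /uf; repeat fb; ring. Qed.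
Lemma H2 {K : comNzRingType} (s t : K) m i : (i < m.+2)%nat -> tf s t m.+4.+1 i m.+3 = 0.
Proof. by move=> h; rewrite tf_gen /step; try lia; repeat fb. Qed.
Lemma H3 {K : comNzRingType} (s t : K) m : tf s t m.+4.+1 m.+3 m.+3 = t.
Proof. ev. Qed.
Lemma H4 {K : comNzRingType} (s t : K) m : tf s t m.+4.+1 m.+3 m.+2 = s.
Proof. ev. Qed.
Lemma H5 {K : comNzRingType} (s t : K) m : tf s t m.+4.+1 m.+2 m.+3 = - s.
Proof. ev. Qed.
Lemma xfG {K : comNzRingType} (s t : K) n p i j : (i.+1 < p)%nat -> (p <= n)%nat -> xf s t n i j = xf s t p i j.
Proof.
move=> h1 h2; rewrite /xf (_ : (i == n.-1) = false); last by apply/eqP; lia.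
by rewrite (_ : (i == p.-1) = false) //; apply/eqP; lia.
Qed.
Lemma G {K : comNzRingType} (s t : K) n p i j : (i.+1 < p)%nat -> (p <= n)%nat -> tf s t n i j = tf s t p i j.
Proof. by move=> h1 h2; rewrite /tf !(xfG s t n p). Qed.
Lemma Prow_tperm {K : comNzRingType} n : Prow K n.+2 = tperm_mx (0 : 'I_n.+2) 1.
Proof.
apply/matrixP=> i j; rewrite !mxE.
case: tpermP => [->|->|/eqP hi /eqP hi'] //=.
rewrite ifN; last by apply: contra hi => /eqP h; apply/eqP/val_inj.
rewrite ifN //; by apply: contra hi' => /eqP h; apply/eqP/val_inj.
Qed.

Lemma Pcol_tperm {K : comNzRingType} n : Pcol K n.+2 = tperm_mx (inord n : 'I_n.+2) ord_max.
Proof.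
apply/matrixP=> i j; rewrite !mxE.
have e : (tperm (inord n : 'I_n.+2) ord_max i == j) = (i == tperm (inord n) ord_max j).
  apply/eqP/eqP => [<-|->]; by rewrite tpermK.
rewrite e /=.
case: (tpermP (inord n : 'I_n.+2) ord_max j) => [->|->|/eqP hi /eqP hi'] //=.
- by rewrite inordK // eqxx.
- by rewrite eqxx ifN //= ?neq_ltn ?ltnSn ?orbT // -val_eqE /= inordK.
rewrite ifN; last by apply: contra hi => /eqP h; apply/eqP/val_inj; rewrite /= inordK.
rewrite ifN //; by apply: contra hi' => /eqP h; apply/eqP/val_inj.
Qed.

Lemma det_Urc {K : comNzRingType} n (s t : K) : \det (Urc n.+2 s t) = \det (Xmx n.+2 s t).
Proof.
rewrite /Urc !det_mulmx Prow_tperm Pcol_tperm !det_perm !odd_tperm.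
have h1 : (0 : 'I_n.+2) != 1 by [].
have h2 : (inord n : 'I_n.+2) != ord_max by rewrite -val_eqE /= inordK // neq_ltn ltnSn.
rewrite h1 h2 /=; ring.
Qed.

Lemma Xmx_mxf {K : comNzRingType} (s t : K) n : Xmx n s t = mxf n (xf s t n).
Proof. by apply/matrixP => i j; rewrite !mxE. Qed.

Definition Emx {K : comNzRingType} n := @mxf K n (fun i j => GRing.add ((i == j)%:R) (GRing.opp ((i.+2 == j)%:R))).

Lemma XE {K : comNzRingType} (s t : K) n : mxf n (xf s t n) *m Emx n = mxf n (tf s t n).
Proof.
apply/matrixP=> i j; rewrite !mxE.
rewrite /Emx; under eq_bigr do rewrite !mxE mulrBr.
rewrite sumrB (bigD1 j) //= eqxx mulr1 big1 ?addr0; last first.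
  move=> k hk; have -> : ((k : nat) == j) = false by apply/negbTE.
  by rewrite mulr0.
rewrite /tf; case: (leqP 2 j) => hj.
  have hjn : (j - 2 < n)%nat by apply: (leq_ltn_trans (leq_subr 2 j) (ltn_ord j)).
  rewrite (bigD1 (Ordinal hjn)) //= big1 ?addr0.
    by rewrite (_ : ((j - 2).+2 == j) = true) ?mulr1 //; apply/eqP; lia.
  move=> k hk; have -> : (k.+2 == j) = false.
    apply/negbTE; apply: contra hk => /eqP hk; apply/eqP/val_inj => /=; lia.
  by rewrite mulr0.
rewrite big1 ?subr0 //.
move=> k _; have -> : (k.+2 == j) = false by lia.
by rewrite mulr0.
Qed.

Lemma detE {K : comNzRingType} n : \det (@Emx K n) = 1.
Proof.
rewrite -det_tr det_trig; last first.
  apply/is_trig_mxP => i j hij; rewrite !mxE.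
  have -> : ((j : nat) == i) = false by lia.
  have -> : (j.+2 == i) = false by lia.
  by rewrite subrr.
apply: big1 => i _; rewrite !mxE eqxx.
by rewrite (_ : (i.+2 == i) = false) ?subr0 //; lia.
Qed.

Definition D {K : comNzRingType} (s t : K) n := \det (mxf n (tf s t n)).
Definition Q {K : comNzRingType} (s t : K) p := \det (mxf p (tf s t p.+1)).

Lemma detUrc_D {K : comNzRingType} (s t : K) n : \det (Urc n.+2 s t) = D s t n.+2.
Proof. by rewrite det_Urc Xmx_mxf /D -XE det_mulmx detE mulr1. Qed.

Lemma D_Q {K : comNzRingType} (s t : K) m : D s t m.+4 = s * Q s t m.+3 + s * t * Q s t m.+2.
Proof.
rewrite /D (detL2 m.+2); last 2 first.
- by move=> j hj; apply: F1.
- by move=> i hi; apply: F2.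
rewrite F3 F4 F5 /Q.
rewrite (mxf_ext m.+2 (tf s t m.+4) (tf s t m.+3)); last by move=> i j hi _; apply: G; lia.
ring.
Qed.

Lemma Q_rec {K : comNzRingType} (s t : K) m : Q s t m.+4 = t * Q s t m.+3 + s ^+ 2 * Q s t m.+2.
Proof.
rewrite /Q (detL2 m.+2); last 2 first.
- by move=> j hj; apply: H1.
- by move=> i hi; apply: H2.
rewrite H3 H4 H5.
rewrite (mxf_ext m.+3 (tf s t m.+4.+1) (tf s t m.+4)); last by move=> i j hi _; apply: G; lia.
rewrite (mxf_ext m.+2 (tf s t m.+4.+1) (tf s t m.+3)); last by move=> i j hi _; apply: G; lia.
ring.
Qed.

Lemma minor_gen {K : comNzRingType} (k : nat) (f : nat -> nat -> K) (i0 j0 : 'I_k.+1) :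
  row' i0 (col' j0 (mxf k.+1 f)) = mxf k (fun i j => f (bump i0 i) (bump j0 j)).
Proof. by apply/matrixP=> i j; rewrite !mxE. Qed.

Lemma det2 {K : comNzRingType} (f : nat -> nat -> K) : \det (mxf 2 f) = f 0 0 * f 1 1 - f 0 1 * f 1 0.
Proof.
rewrite (expand_det_row _ ord0) !big_ord_recl big_ord0 /cofactor !minor_gen !det_mx11 !mxE /=.
ring.
Qed.

Lemma det3 {K : comNzRingType} (f : nat -> nat -> K) : \det (mxf 3 f) =
  f 0 0 * (f 1 1 * f 2 2 - f 1 2 * f 2 1) - f 0 1 * (f 1 0 * f 2 2 - f 1 2 * f 2 0)
  + f 0 2 * (f 1 0 * f 2 1 - f 1 1 * f 2 0).
Proof.
rewrite (expand_det_row _ ord0) !big_ord_recl big_ord0 /cofactor !minor_gen !det2 !mxE /=.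
ring.
Qed.

Lemma Q2 {K : comNzRingType} (s t : K) : Q s t 2 = s * t.
Proof. rewrite /Q det2 /tf /xf /uf /=; ring. Qed.

Lemma Q3 {K : comNzRingType} (s t : K) : Q s t 3 = 2%:R * s * t ^+ 2.
Proof. rewrite /Q det3 /tf /xf /uf /=; ring. Qed.

Lemma main_gen {K : comNzRingType} (s t : K) :
  \det (Urc 4 s t) = 3%:R * s ^+ 2 * t ^+ 2 /\
  \det (Urc 5 s t) = s ^+ 4 * t + 4%:R * s ^+ 2 * t ^+ 3 /\
  (forall n : nat, leq 6 n ->
     \det (Urc n s t) = t * \det (Urc n.-1 s t) + s ^+ 2 * \det (Urc n.-2 s t)).
Proof.
split; first by rewrite (detUrc_D s t 2) (D_Q s t 0) Q2 Q3; ring.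
split; first by rewrite (detUrc_D s t 3) (D_Q s t 1) (Q_rec s t 0) Q2 Q3; ring.
move=> n hn; have [m ->] : exists m, n = m.+4.+2 by exists (n - 6)%nat; lia.
rewrite /= (detUrc_D s t m.+4) (detUrc_D s t m.+3) (detUrc_D s t m.+2).
rewrite (D_Q s t m.+2) (D_Q s t m.+1) (D_Q s t m) (Q_rec s t m.+1) (Q_rec s t m).
ring.
Qed.

Theorem proposition4p3 (s t : R) :
  \det (Urc 4 s t) = 3%:R * s ^+ 2 * t ^+ 2 /\
  \det (Urc 5 s t) = s ^+ 4 * t + 4%:R * s ^+ 2 * t ^+ 3 /\
  (forall n : nat, leq 6 n ->
     \det (Urc n s t) = t * \det (Urc n.-1 s t) + s ^+ 2 * \det (Urc n.-2 s t)).
Proof. exact: main_gen. Qed.
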